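(* Let $G$ be a finite abelian group with $|G|>1$, let $p(G)$ be the smallest prime dividing $|G|$, and let $S\subset G$ with $|S|\leqslant\log_2p(G)$. Then one can assign to each non-empty subset $X\subseteq S$ an element $s_X\in X$ with the following property. For all non-empty $X,Y\subseteq S$, the only solution of $x+y=s_X+s_Y$ with $x\in X$ and $y\in Y$ is $(x,y)=(s_X,s_Y)$. *)

(* Defs.v *)
From mathcomp Require Import all_boot all_order all_algebra.
Set Implicit Arguments. Unset Strict Implicit. Unset Printing Implicit Defensive.

(* Main.v *)
Require Import Defs.
From mathcomp Require Import all_boot all_order all_algebra all_fingroup all_solvable.
From mathcomp Require Import ring lra zify.
Import GRing.Theory Num.Theory Order.TTheory.
Local Open Scope ring_scope.
Set Implicit Arguments. Unset Strict Implicit. Unset Printing Implicit Defensive.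

Definition e2 n (A B : 'I_n -> option 'I_n) (i c : 'I_n) : rat :=
  (Some c == A i)%:R - (Some c == B i)%:R.
Definition ee n (A B : 'I_n -> option 'I_n) : 'M[rat]_n := \matrix_(i, c) e2 A B i c.

Lemma sum_delta n (b : 'I_n) : \sum_(j < n) ((Some j == Some b)%:R : rat) = 1.
Proof.
rewrite (bigD1 b) //= eqxx big1 ?addr0 // => j /negbTE hj.
by rewrite (inj_eq (@Some_inj _)) hj.
Qed.

Lemma unlift_some n (j : 'I_n.+1) (c' : 'I_n) (a : option 'I_n.+1) :
  (Some c' == obind (unlift j) a) = (Some (lift j c') == a).
Proof.
case: a => [a|] //=.
case: unliftP => [a'|] ->.
  by rewrite !(inj_eq (@Some_inj _)) (inj_eq (@lift_inj _ _)).
rewrite (inj_eq (@Some_inj _)); apply/esym/negbTE; rewrite eq_sym; exact: neq_lift.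
Qed.

Lemma tu_det n (A B : 'I_n -> option 'I_n) : `|\det (ee A B)| <= 1.
Proof.
elim: n A B => [|n IH] A B; first by rewrite det_mx00 normr1.
case: (boolP [exists i, (A i == None) || (B i == None) || (A i == B i)]).
- case/existsP => i Hi.
  rewrite (expand_det_row _ i).
  apply: le_trans (ler_norm_sum _ _ _) _.
  have Hc j : `|cofactor (ee A B) i j| <= 1.
    rewrite /cofactor normrM normrX normrN1 expr1n mul1r.
    have -> : row' i (col' j (ee A B)) =
       ee (fun i' => obind (unlift j) (A (lift i i')))
          (fun i' => obind (unlift j) (B (lift i i'))).
      by apply/matrixP => i' c'; rewrite !mxE /e2 !unlift_some.
    exact: IH.
  apply: (@le_trans _ _ (\sum_j `|ee A B i j|)).
    apply: ler_sum => j _; rewrite normrM.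
    by apply: ler_piMr => //.
  under eq_bigr => j _ do rewrite mxE /e2.
  case/orP: Hi => [/orP [] /eqP HA | /eqP HAB].
  + rewrite HA; case HB: (B i) => [b|].
      under eq_bigr => j _ do rewrite /= sub0r normrN normr_nat.
      by rewrite sum_delta.
    by rewrite big1 // => j _; rewrite /= subrr normr0.
  + rewrite HA; case HB: (A i) => [b|].
      under eq_bigr => j _ do rewrite /= subr0 normr_nat.
      by rewrite sum_delta.
    by rewrite big1 // => j _; rewrite /= subrr normr0.
  + by rewrite big1 // => j _; rewrite HAB subrr normr0.
- rewrite negb_exists => /forallP Hall.
  suff -> : \det (ee A B) = 0 by rewrite normr0.
  rewrite -det_tr; apply/eqP/det0P; exists (const_mx 1 : 'rV_n.+1).
    by apply/eqP => /matrixP /(_ ord0 ord0) /eqP; rewrite !mxE oner_eq0.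
  apply/matrixP => j i; rewrite !mxE.
  have := Hall i; case HA: (A i) => [a|] //; case HB: (B i) => [b|] //=.
  move=> hab.
  under eq_bigr => c _ do rewrite !mxE /e2 HA HB mul1r.
  by rewrite sumrB !sum_delta subrr.
Qed.

Definition sm n (I : {set 'I_n}) (A1 B1 A2 B2 : 'I_n -> option 'I_n) : 'M[rat]_n :=
  \matrix_(i, c) (e2 A1 B1 i c + (i \in I)%:R * e2 A2 B2 i c).

Lemma split_det n (I : {set 'I_n}) A1 B1 A2 B2 :
  `|\det (sm I A1 B1 A2 B2)| <= 2 ^+ #|I|.
Proof.
suff H : forall s (I : {set 'I_n}) A1 B1, #|I| = s -> `|\det (sm I A1 B1 A2 B2)| <= 2 ^+ s by exact: H.
elim=> [|s IH] {}I {}A1 {}B1 HI.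
  have -> : sm I A1 B1 A2 B2 = ee A1 B1.
    apply/matrixP => i c; rewrite !mxE.
    by move/eqP: HI; rewrite cards_eq0 => /eqP ->; rewrite inE mul0r addr0.
  by rewrite expr0 tu_det.
have : (0 < #|I|)%N by rewrite HI.
case/card_gt0P => i0 Hi0.
have HI' : #|I :\ i0| = s.
  by move: HI; rewrite (cardsD1 i0) Hi0 add1n => -[].
set A1' := fun i => if i == i0 then A2 i0 else A1 i.
set B1' := fun i => if i == i0 then B2 i0 else B1 i.
rewrite (@determinant_multilinear _ _ _ (sm (I :\ i0) A1 B1 A2 B2)
   (sm (I :\ i0) A1' B1' A2 B2) i0 1 1).
- rewrite !mul1r exprS mulr2n mulrDl !mul1r.
  apply: le_trans (ler_normD _ _) _.
  by apply: lerD; apply: IH.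
- apply/rowP => c; rewrite !mxE !inE eqxx Hi0 /= !mul0r !addr0 !mul1r.
  by rewrite /e2 /A1' /B1' eqxx.
- apply/matrixP => i c; rewrite !mxE !inE.
  by rewrite eq_sym (negbTE (neq_lift _ _)).
- apply/matrixP => i c; rewrite !mxE !inE /A1' /B1' /e2.
  by rewrite !(eq_sym _ i0) !(negbTE (neq_lift _ _)).
Qed.

Lemma zmod_coprime_mul0 (G : finZmodType) (a : G) (d : nat) :
  coprime d #|G| -> a *+ d = 0 -> a = 0.
Proof.
move=> cop ad.
have h1 : (#[a]%g %| d)%N by rewrite order_dvdn FinRing.zmodXgE ad.
have h2 : (#[a]%g %| #|G|)%N.
  by rewrite -cardsT; apply: order_dvdG; rewrite inE.
have : (#[a]%g %| gcdn d #|G|)%N by rewrite dvdn_gcd h1 h2.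
rewrite (eqP cop) dvdn1 order_eq1 => /eqP; done.
Qed.

Lemma map_intr_inj m n (X Y : 'M[int]_(m, n)) :
  map_mx intr X = map_mx intr Y :> 'M[rat]_(m, n) -> X = Y.
Proof.
move=> E; apply/matrixP => i j; move/matrixP: E => /(_ i j); rewrite !mxE.
exact: intr_inj.
Qed.

Lemma pick_inj n m (h : 'I_n -> 'I_m) (c : 'I_n) a : injective h ->
  (Some c == [pick c' | h c' == a]) = (h c == a).
Proof.
move=> hi; case: pickP => [c' /eqP Hc'|H].
  by rewrite (inj_eq (@Some_inj _)) -(inj_eq hi) Hc'.
by rewrite H.
Qed.

Section Main.
Variables (G : finZmodType) (S : {set G}).
Local Notation k := #|S|.
Hypothesis G1 : (1 < #|G|)%N.
Hypothesis hp : (2 ^ #|S| <= pdiv #|G|)%N.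
Definition gS (i : 'I_k) : G := enum_val i.
Definition Q := (('I_k * 'I_k) * ('I_k * 'I_k))%type.
Definition rel (q : Q) : bool := gS q.1.1 + gS q.1.2 == gS q.2.1 + gS q.2.2.
Definition ent (R : pzRingType) (q : Q) (c : 'I_k) : R :=
  (rel q)%:R * (((c == q.1.1)%:R - (c == q.2.1)%:R) + ((c == q.1.2)%:R - (c == q.2.2)%:R)).
Definition AZ : 'M[int]_(#|{: Q}|, k) := \matrix_(i, c) ent int (enum_val i) c.
Definition A : 'M[rat]_(#|{: Q}|, k) := map_mx intr AZ.

Lemma entE (q : Q) c : ((ent int q c)%:~R : rat) = ent rat q c.
Proof. by rewrite /ent intrM intrD !intrB !mulrz_nat. Qed.

Lemma AE i c : A i c = ent rat (enum_val i) c.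
Proof. by rewrite !mxE entE. Qed.

Definition fr (w : 'I_k -> rat) :=
  forall a b c d, gS a + gS b = gS c + gS d -> w a + w b = w c + w d.

Lemma sumdel (F : 'I_k -> rat) a : \sum_j (j == a)%:R * F j = F a.
Proof.
rewrite (bigD1 a) //= eqxx mul1r big1 ?addr0 // => j /negbTE ->; by rewrite mul0r.
Qed.

Lemma kernel_fr (w : 'cV[rat]_k) : A *m w = 0 -> fr (fun i => w i 0).
Proof.
move=> Hw a b c d H.
have := congr1 (fun M : 'cV[rat]__ => M (enum_rank ((a, b), (c, d))) 0) Hw.
rewrite !mxE.
under eq_bigr => j _ do rewrite AE enum_rankK /ent /rel /= H eqxx mul1r
   mulrDl !mulrBl.
rewrite big_split /= !sumrB !sumdel => /eqP.
by rewrite addrACA -opprD subr_eq0 => /eqP.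
Qed.

Definition vZ (x y : 'I_k) : 'rV[int]_k := \row_c ((c == x)%:R - (c == y)%:R).

Definition Phi (u : 'rV[int]_k) : G := \sum_c gS c *~ u 0 c.

Lemma PhiZ z u : Phi (z *: u) = Phi u *~ z.
Proof.
rewrite /Phi mulrz_suml; apply: eq_bigr => c _; by rewrite mxE mulrC mulrzA.
Qed.

Lemma sumzdel a : \sum_c gS c *~ (c == a)%:R = gS a.
Proof.
rewrite (bigD1 a) //= eqxx mulrz_nat mulr1n big1 ?addr0 // => j /negbTE ->.
by rewrite mulrz_nat mulr0n.
Qed.

Lemma mulrzD' (x : G) (m n : int) : x *~ (m + n) = x *~ m + x *~ n.
Proof. exact: mulrzDr. Qed.

Lemma Phi_row i : \sum_c gS c *~ AZ i c = 0.
Proof.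
under eq_bigr => c _ do rewrite mxE /ent.
case Hr: (rel (enum_val i)).
  under eq_bigr => c _ do rewrite mul1r mulrzD' !mulrzBr.
  rewrite !big_split /= !sumrN !sumzdel.
  move/eqP: Hr => Hr; rewrite addrACA -opprD -Hr; exact: subrr.
by rewrite big1 // => c _; rewrite mul0r mulr0z.
Qed.

Lemma PhiM r (mu : 'rV[int]_r) (B : 'M[int]_(r, k)) :
  (forall i, \sum_c gS c *~ B i c = 0) -> Phi (mu *m B) = 0.
Proof.
move=> HB; rewrite /Phi.
under eq_bigr => c _ do rewrite mxE mulrz_sumr.
rewrite exchange_big /=; apply: big1 => i _.
under eq_bigr => c _ do rewrite mulrC mulrzA.
by rewrite -mulrz_suml HB mul0rz.
Qed.

Lemma PhivZ x y : Phi (vZ x y) = gS x - gS y.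
Proof.
rewrite /Phi; under eq_bigr => c _ do rewrite mxE mulrzBr.
by rewrite sumrB !sumzdel.
Qed.

Lemma hard_branch x y : x != y -> (map_mx intr (vZ x y) <= A)%MS -> False.
Proof.
move=> xy Hv.
set r := \rank A.
set f := maxrankfun A.
set AR := rowsub f A.
have Hv' : (map_mx intr (vZ x y) <= AR)%MS by rewrite /AR eq_maxrowsub.
case/submxP: Hv' => lam Hlam.
have hfull : row_full AR^T by rewrite /row_full mxrank_tr; exact: maxrowsub_free.
set h := fullrankfun hfull.
have hinj : injective h by exact: fullrankfun_inj.
set MT := rowsub h AR^T.
have MTu : MT \in unitmx by exact: fullrowsub_unit.
set MZ : 'M[int]_r := \matrix_(i, c) AZ (f i) (h c).
set M := map_mx intr MZ : 'M[rat]_r.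
have MTE : MT = M^T by apply/matrixP => i c; rewrite !mxE.
set vCZ : 'rV[int]_r := \row_c vZ x y 0 (h c).
set ARZ : 'M[int]_(r, k) := \matrix_(i, c) AZ (f i) c.
have ARE : AR = map_mx intr ARZ by apply/matrixP => i c; rewrite !mxE.
have HvC : map_mx intr vCZ = lam *m M.
  apply/rowP => c; have := congr1 (fun N : 'rV[rat]_k => N 0 (h c)) Hlam.
  rewrite !mxE => ->; apply: eq_bigr => i _; by rewrite !mxE.
have Hdet : \det M *: lam = map_mx intr vCZ *m \adj M.
  by rewrite HvC -mulmxA mul_mx_adj mul_mx_scalar.
have HZ : (\det MZ) *: vZ x y = (vCZ *m \adj MZ) *m ARZ.
  apply: map_intr_inj.
  rewrite map_mxZ /= Hlam -det_map_mx scalemxAl Hdet !map_mxM map_mx_adj ARE //.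
have HPhi : (gS x - gS y) *~ \det MZ = 0.
  rewrite -PhivZ -PhiZ HZ PhiM // => i.
  under eq_bigr => c _ do rewrite /ARZ mxE.
  exact: (Phi_row (f i)).
have hdetb : `|\det M| <= 2 ^+ r.
  pose A1 i := if rel (enum_val (f i)) then [pick c | h c == (enum_val (f i)).1.1] else None.
  pose B1 i := if rel (enum_val (f i)) then [pick c | h c == (enum_val (f i)).2.1] else None.
  pose A2 i := if rel (enum_val (f i)) then [pick c | h c == (enum_val (f i)).1.2] else None.
  pose B2 i := if rel (enum_val (f i)) then [pick c | h c == (enum_val (f i)).2.2] else None.
  have -> : M = sm setT A1 B1 A2 B2.
    apply/matrixP => i c; rewrite !mxE entE /ent /A1 /B1 /A2 /B2 /e2 inE mul1r.
    case: (rel (enum_val (f i))) => /=.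
      by rewrite !pick_inj // mul1r.
    by rewrite mul0r; ring.
  by apply: le_trans (split_det _ _ _ _ _) _; rewrite cardsT card_ord.
set d := `|\det MZ|%N.
have hd : (d <= 2 ^ r)%N.
  move: hdetb; rewrite det_map_mx -intr_norm -abszE -/d -pmulrn.
  by rewrite -natrX ler_nat.
have hd0 : (0 < d)%N.
  rewrite absz_gt0; move: MTu; rewrite unitmxE unitfE MTE det_tr det_map_mx.
  by apply: contra => /eqP ->.
have hr : (r <= k)%N := rank_leq_col A.
have hk : (2 <= k)%N.
  move: xy (ltn_ord x) (ltn_ord y); rewrite -val_eqE /=; lia.
have pp : prime (pdiv #|G|) := pdiv_prime G1.
have h2 : (2 ^ r <= 2 ^ k)%N by rewrite leq_exp2l.
have cop : coprime d #|G|.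
  apply: contraT => ncop.
  have g1 : (1 < gcdn d #|G|)%N.
    by move: ncop; rewrite /coprime ltn_neqAle eq_sym gcdn_gt0 hd0 andbT.
  have qg := pdiv_dvd (gcdn d #|G|).
  have l1 : (pdiv #|G| <= pdiv (gcdn d #|G|))%N.
    apply: pdiv_min_dvd; first exact/prime_gt1/pdiv_prime.
    exact: dvdn_trans qg (dvdn_gcdr _ _).
  have l2 : (pdiv (gcdn d #|G|) <= d)%N.
    exact: dvdn_leq hd0 (dvdn_trans qg (dvdn_gcdl _ _)).
  have e : pdiv #|G| = (2 ^ k)%N.
    apply/eqP; rewrite eqn_leq hp andbT.
    exact: leq_trans l1 (leq_trans l2 (leq_trans hd h2)).
  move: pp; rewrite e => pp.
  have d2 : (2 %| 2 ^ k)%N by apply: dvdn_exp => //; apply: leq_trans hk.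
  have /(@prime_nt_dvdP 2 _ pp isT) e2 := d2.
  have : (2 ^ 2 <= 2 ^ k)%N by rewrite leq_exp2l.
  by rewrite -e2.
have hmul : (gS x - gS y) *+ d = 0.
  move: HPhi; rewrite /d; case: (intP (\det MZ)) => [|n|n].
  - by rewrite mulr0n.
  - by rewrite -pmulrn.
  - by rewrite mulrNz abszN /= -pmulrn => /eqP; rewrite oppr_eq0 => /eqP.
have := zmod_coprime_mul0 cop hmul => /eqP; rewrite subr_eq0 => /eqP /enum_val_inj exy.
by rewrite exy eqxx in xy.
Qed.

Lemma sep x y : x != y -> exists w : 'I_k -> rat, fr w /\ w x != w y.
Proof.
move=> xy.
set v : 'rV[rat]_k := map_mx intr (vZ x y).
case: (boolP (v <= A)%MS) => Hv; first by case: (hard_branch xy Hv).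
rewrite submxE in Hv.
have [j Hj] : exists j, (v *m cokermx A) 0 j != 0.
  apply/existsP; move: Hv; apply: contraR; rewrite negb_exists => /forallP H.
  apply/eqP/rowP => j; rewrite mxE; apply/eqP; move: (H j); rewrite negbK.
  by rewrite !mxE.
exists (fun i => (col j (cokermx A)) i 0); split.
  apply: kernel_fr; rewrite colE mulmxA mulmx_coker mul0mx //.
apply: contra Hj => /eqP E; rewrite !mxE.
under eq_bigr => c _ do rewrite !mxE intrB !mulrz_nat mulrBl.
rewrite sumrB !sumdel; move: E; rewrite !mxE => ->; by rewrite subrr.
Qed.

Lemma comb (L : seq ('I_k * 'I_k)) : all (fun p => p.1 != p.2) L ->
  exists w, fr w /\ forall p, p \in L -> w p.1 != w p.2.
Proof.
elim: L => [|p L IH] /=.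
  by move=> _; exists (fun _ => 0); split => // a b c d _; rewrite addr0.
case/andP => Hp /IH [w1 [fr1 H1]].
have [w2 [fr2 H2]] := sep Hp.
pose d1 (q : 'I_k * 'I_k) := w1 q.1 - w1 q.2.
pose d2 (q : 'I_k * 'I_k) := w2 q.1 - w2 q.2.
pose c : rat := 1 + \sum_(q : 'I_k * 'I_k) `|d1 q / d2 q|.
have cge q : `|d1 q / d2 q| < c.
  rewrite /c (bigD1 q) //=.
  have : 0 <= \sum_(i | i != q) `|d1 i / d2 i| by apply: sumr_ge0 => i _.
  lra.
exists (fun i => w1 i + c * w2 i); split.
  move=> a b cc d H; rewrite addrACA (fr1 _ _ _ _ H) -mulrDr (fr2 _ _ _ _ H) mulrDr addrACA //.
have key q : (d1 q != 0) || (d2 q != 0) -> w1 q.1 + c * w2 q.1 != w1 q.2 + c * w2 q.2.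
  move=> Hq; apply/negP => /eqP E.
  have E' : d1 q + c * d2 q = 0.
    have -> : d1 q + c * d2 q = (w1 q.1 + c * w2 q.1) - (w1 q.2 + c * w2 q.2)
      by rewrite /d1 /d2; ring.
    by rewrite E subrr.
  case: (eqVneq (d2 q) 0) => Hd2.
    by move: E' Hq; rewrite Hd2 mulr0 addr0 => ->; rewrite eqxx.
  have Hc : c = - (d1 q / d2 q).
    by apply: (mulIf Hd2); rewrite mulNr divfK //; apply/eqP; rewrite -addr_eq0 addrC E'.
  have := cge q; rewrite Hc => H.
  have h2 : - (d1 q / d2 q) <= `|d1 q / d2 q| by rewrite -normrN ler_norm.
  lra.
move=> q; rewrite inE => /orP [/eqP -> | Hq].
  by apply: key; apply/orP; right; rewrite /d2 subr_eq0.
by apply: key; apply/orP; left; rewrite /d1 subr_eq0 H1.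
Qed.

Lemma inj_fr : exists f, fr f /\ injective f.
Proof.
have [|f [frf Hf]] := @comb [seq q <- enum {: 'I_k * 'I_k} | q.1 != q.2].
  by apply/allP => q; rewrite mem_filter => /andP [].
exists f; split => // i j Eij; apply/eqP; apply: contraT => nij.
have := Hf (i, j); rewrite mem_filter /= nij mem_enum => /(_ isT).
by rewrite Eij eqxx.
Qed.
End Main.
Arguments gS {G} S i.


Theorem lemma5p5 (G : finZmodType) (S : {set G}) :
  (1 < #|G|)%N ->
  (#|S| <= trunc_log 2 (pdiv #|G|))%N ->
  exists s : {set G} -> G,
    (forall X : {set G}, X \subset S -> X != set0 -> s X \in X) /\
    (forall X Y : {set G}, X \subset S -> X != set0 ->
                           Y \subset S -> Y != set0 ->
       forall x y : G, x \in X -> y \in Y -> x + y = s X + s Y ->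
         x = s X /\ y = s Y).
Proof.
move=> G1 hS.
have hp : (2 ^ #|S| <= pdiv #|G|)%N.
  apply: leq_trans (trunc_logP (isT : (1 < 2)%N) _).
    by rewrite leq_exp2l.
  by rewrite prime_gt0 // pdiv_prime.
have [f [frf finj]] := inj_fr G1 hp.
pose s (X : {set G}) := if [pick i | gS S i \in X] is Some i0
   then gS S [arg max_(j > i0 | gS S j \in X) f j]%O else 0.
have rep (X : {set G}) x : X \subset S -> x \in X -> exists i, x = gS S i.
  move=> XS Hx; have xS : x \in S := subsetP XS x Hx.
  by exists (enum_rank_in xS x); rewrite /gS enum_rankK_in.
have spec (X : {set G}) : X \subset S -> X != set0 ->
    exists j, s X = gS S j /\ gS S j \in X /\ forall i, gS S i \in X -> f i <= f j.
  move=> XS X0; rewrite /s; case: pickP => [i0 Hi0|Hn].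
    by case: arg_maxP => // j Hj Hmax; exists j.
  case/set0Pn: X0 => x Hx; have [i ei] := rep X x XS Hx.
  by move: (Hn i); rewrite -ei Hx.
exists s; split.
  by move=> X XS X0; have [j [-> [Hj _]]] := spec X XS X0.
move=> X Y XS X0 YS Y0 x y Hx Hy.
have [jX [eX [HjX mX]]] := spec X XS X0.
have [jY [eY [HjY mY]]] := spec Y YS Y0.
have [ix ex] := rep X x XS Hx.
have [iy ey] := rep Y y YS Hy.
rewrite eX eY ex ey => E.
have F := frf _ _ _ _ E.
have lx : f ix <= f jX by apply: mX; rewrite -ex.
have ly : f iy <= f jY by apply: mY; rewrite -ey.
have ex' : f ix = f jX by lra.
have ey' : f iy = f jY by lra.
by rewrite (finj _ _ ex') (finj _ _ ey').
Qed.
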